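(* Let $g_1,g_2$ be independent exponential random variables with means $\varepsilon_1,\varepsilon_2>0$. Fix rates $R_d>R_s\ge 0$ and $\rho\ge 0$, let $SNR=P_s/\sigma^2$ and $INR=P_d/\sigma^2=SNR^\rho$. Define the events $$E_o^{\mathrm{MF}}=\Big\{\tfrac12\log_2\!\Big(\tfrac12+SNR\tfrac{g_1g_2}{g_1+g_2}\Big)<R_d\Big\},\quad E_o^{\mathrm{cs}}=\Big\{\tfrac12\log_2\!\big(1+\min\{g_1,g_2\}SNR\big)<R_d\Big\},$$ $$E_l=\Big\{\tfrac12\log_2\!\Big(1+\tfrac{g_1\,SNR}{g_2\,INR+1}\Big)>R_d-R_s\Big\},$$ and the total outage probabilities $p_t^{\mathrm{MF}}=\Pr(E_o^{\mathrm{MF}}\cup E_l)$ and $p_t^{\mathrm{cs}}=\Pr(E_o^{\mathrm{cs}}\cup E_l)$. Then $$\limsup_{SNR\to\infty}\frac{-\log p_t^{\mathrm{MF}}}{\log SNR}=\limsup_{SNR\to\infty}\frac{-\log p_t^{\mathrm{cs}}}{\log SNR}=\begin{cases}0,&\rho\le 1,\\ \rho-1,&1<\rho\le 2,\\ 1,&\rho>2.\end{cases}$$ That is, the modulo-and-forward scheme achieves the full generalized secure diversity gain (the one given by the cut-set bound).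
   Context: Untrusted relay channel without channel state information at the transmitter: $h_i\sim\mathcal{CN}(0,\varepsilon_i)$, $g_i=|h_i|^2$ ($g_1$: source–relay, $g_2$: destination–relay and relay–destination). $P_s$ is the source/relay power, $P_d$ the destination's artificial-noise power, $\sigma^2$ the noise variance. $R_d$ is the total (confidential plus randomization) transmission rate and $R_s$ the confidential rate. $E_o^{\mathrm{MF}}$ is connection outage of the modulo-and-forward scheme, $E_o^{\mathrm{cs}}$ is connection outage for the cut-set upper bound on end-to-end capacity (valid for any relay processing), and $E_l$ is secrecy outage at the untrusted relay. The generalized secure diversity gain is $\limsup_{SNR\to\infty}(-\log p_t)/\log SNR$ with $INR=SNR^\rho$. *)

(* Defs.v *)
From Stdlib Require Import Reals Lra ClassicalDescription.
Open Scope R_scope.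

Definition log2 (x : R) : R := ln x / ln 2.

Fixpoint rsum (f : nat -> R) (N : nat) : R :=
  match N with
  | O => 0
  | S k => rsum f k + f k
  end.

Definition dy (n i : nat) : R := INR i / 2 ^ n.

(** P(a <= g < b) for g exponential with mean eps. *)
Definition exp_mass (eps a b : R) : R := exp (- a / eps) - exp (- b / eps).

(** Mass of the half-open dyadic cell [i/2^n,(i+1)/2^n) x [j/2^n,(j+1)/2^n)
    under the law of (g1,g2), g1 ~ Exp(mean e1), g2 ~ Exp(mean e2) independent. *)
Definition cell_mass (e1 e2 : R) (n i j : nat) : R :=
  exp_mass e1 (dy n i) (dy n (S i)) * exp_mass e2 (dy n j) (dy n (S j)).

Definition cell_in (A : R -> R -> Prop) (n i j : nat) : Prop :=
  forall x y, dy n i <= x < dy n (S i) -> dy n j <= y < dy n (S j) -> A x y.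

Definition inner_approx (e1 e2 : R) (A : R -> R -> Prop) (n : nat) : R :=
  rsum (fun i => rsum (fun j =>
     if excluded_middle_informative (cell_in A n i j) then cell_mass e1 e2 n i j else 0)
     (n * 2 ^ n)) (n * 2 ^ n).

(** [p] is the probability of the event {(g1,g2) in A}: the supremum of the
    masses of finite unions of dyadic cells contained in A (inner measure).
    For events that are relatively open in [0,oo)^2 (as all events of the
    theorem are) this is exactly the probability Pr((g1,g2) in A). *)
Definition is_prob (e1 e2 : R) (A : R -> R -> Prop) (p : R) : Prop :=
  is_lub (fun r => exists n : nat, r = inner_approx e1 e2 A n) p.

Definition is_limsup_infty (f : R -> R) (L : R) : Prop :=
  (forall e, 0 < e -> exists M, forall s, M < s -> f s < L + e) /\
  (forall e, 0 < e -> forall M, exists s, M < s /\ L - e < f s).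

Definition E_MF (Rd snr : R) (g1 g2 : R) : Prop :=
  / 2 * log2 (/ 2 + snr * (g1 * g2 / (g1 + g2))) < Rd.

Definition E_cs (Rd snr : R) (g1 g2 : R) : Prop :=
  / 2 * log2 (1 + Rmin g1 g2 * snr) < Rd.

Definition E_l (Rd Rs rho snr : R) (g1 g2 : R) : Prop :=
  / 2 * log2 (1 + g1 * snr / (g2 * Rpower snr rho + 1)) > Rd - Rs.

Definition gsdg (rho : R) : R :=
  if Rle_dec rho 1 then 0 else if Rle_dec rho 2 then rho - 1 else 1.

(* Main.v *)
Require Import Defs.
From Stdlib Require Import Reals Lra Lia Psatz ClassicalDescription.
Open Scope R_scope.

Lemma rsum_le f g N : (forall i, (i < N)%nat -> f i <= g i) -> rsum f N <= rsum g N.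
Proof.
  induction N; simpl; intros H. lra.
  assert (f N <= g N) by (apply H; lia).
  assert (rsum f N <= rsum g N) by (apply IHN; intros; apply H; lia). lra.
Qed.

Lemma rsum_nonneg f N : (forall i, (i<N)%nat -> 0 <= f i) -> 0 <= rsum f N.
Proof.
  induction N; simpl; intros H. lra.
  assert (0 <= f N) by (apply H; lia).
  assert (0 <= rsum f N) by (apply IHN; intros; apply H; lia). lra.
Qed.

Lemma rsum_plus f g N : rsum (fun i => f i + g i) N = rsum f N + rsum g N.
Proof. induction N; simpl. lra. rewrite IHN. lra. Qed.

Lemma rsum_scal c f N : rsum (fun i => c * f i) N = c * rsum f N.
Proof. induction N; simpl. lra. rewrite IHN. lra. Qed.

Lemma rsum_tel_up f G N : (forall i, (i<N)%nat -> f i <= G i - G (S i)) ->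
  rsum f N <= G 0%nat - G N.
Proof.
  induction N; simpl; intros H. lra.
  assert (f N <= G N - G (S N)) by (apply H; lia).
  assert (rsum f N <= G 0%nat - G N) by (apply IHN; intros; apply H; lia). lra.
Qed.

Lemma rsum_tel_low f G s N : (forall i, 0 <= f i) ->
  (forall i, (s <= i)%nat -> G i - G (S i) <= f i) -> (s <= N)%nat ->
  G s - G N <= rsum f N.
Proof.
  intros Hf HG. induction N; intros Hs.
  - assert (s = 0%nat) by lia. subst. simpl. lra.
  - destruct (Nat.eq_dec s (S N)) as [E|E].
    + subst. assert (0 <= rsum f (S N)) by (apply rsum_nonneg; auto). lra.
    + simpl. assert (G s - G N <= rsum f N) by (apply IHN; lia).
      assert (G N - G (S N) <= f N) by (apply HG; lia). lra.
Qed.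

Lemma rsum_ge_term f N k : (forall i, 0 <= f i) -> (k < N)%nat -> f k <= rsum f N.
Proof.
  intros Hf. induction N; intros Hk. lia. simpl.
  destruct (Nat.eq_dec k N) as [E|E].
  + subst. assert (0 <= rsum f N) by (apply rsum_nonneg; auto). lra.
  + assert (f k <= rsum f N) by (apply IHN; lia). specialize (Hf N). lra.
Qed.

Lemma pow2_pos n : 0 < 2 ^ n.
Proof. apply pow_lt. lra. Qed.

Lemma dy_S n i : dy n (S i) = dy n i + / 2 ^ n.
Proof. unfold dy. rewrite S_INR. field. apply Rgt_not_eq, pow2_pos. Qed.

Lemma dy_0 n : dy n 0 = 0.
Proof. unfold dy. simpl. field. apply Rgt_not_eq, pow2_pos. Qed.

Lemma dy_nonneg n i : 0 <= dy n i.
Proof. unfold dy. apply Rmult_le_pos. apply pos_INR. left; apply Rinv_0_lt_compat, pow2_pos. Qed.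

Lemma dy_mul n K : dy n (K * 2 ^ n) = INR K.
Proof.
  unfold dy. rewrite mult_INR, pow_INR. replace (INR 2) with 2 by (simpl; lra). field.
  apply Rgt_not_eq, pow2_pos.
Qed.

Lemma dy_le n i j : (i <= j)%nat -> dy n i <= dy n j.
Proof.
  intros H. unfold dy. apply Rmult_le_compat_r. left; apply Rinv_0_lt_compat, pow2_pos.
  apply le_INR; auto.
Qed.

Lemma inv_pow2_le1 n : / 2 ^ n <= 1.
Proof.
  assert (1 <= 2 ^ n) by (apply pow_R1_Rle; lra).
  rewrite <- Rinv_1. apply Rinv_le_contravar; lra.
Qed.

Lemma pow2_ge n : INR n + 1 <= 2 ^ n.
Proof.
  induction n. simpl. lra. rewrite S_INR. simpl.
  assert (0 <= INR n) by apply pos_INR. lra.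
Qed.

Lemma least_pow t m : / 2 ^ m <= t -> exists k, / 2 ^ k <= t /\ (k = 0%nat \/ t < / 2 ^ (k - 1)).
Proof.
  induction m; intros H. exists 0%nat; auto.
  destruct (Rle_dec (/ 2 ^ m) t) as [H1|H1]. apply IHm; auto.
  exists (S m). split; auto. right. replace (S m - 1)%nat with m by lia. lra.
Qed.

Lemma dyadic_choice t N0 : 0 < t <= 1 ->
  exists n, (N0 <= n)%nat /\ t * / 2 ^ (S N0) < / 2 ^ n /\ / 2 ^ n <= t.
Proof.
  intros Ht.
  destruct (INR_unbounded (/ t)) as [m Hm].
  assert (/ 2 ^ m <= t).
  { assert (INR m + 1 <= 2 ^ m) by apply pow2_ge.
    assert (0 < / t) by (apply Rinv_0_lt_compat; lra).
    assert (/ t < 2 ^ m) by lra.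
    rewrite <- (Rinv_inv t). left. apply Rinv_lt_contravar; auto.
    apply Rmult_lt_0_compat; auto. apply pow2_pos. }
  destruct (least_pow t m H) as [k [Hk1 Hk2]].
  exists (k + N0)%nat. split. lia.
  rewrite pow_add, Rinv_mult. simpl (2 ^ S N0). rewrite Rinv_mult.
  assert (0 < / 2 ^ N0) by (apply Rinv_0_lt_compat, pow2_pos).
  assert (/ 2 ^ N0 <= 1) by apply inv_pow2_le1.
  assert (t * / 2 < / 2 ^ k).
  { destruct Hk2 as [E|E]. subst. simpl. rewrite Rinv_1. lra.
    destruct k. simpl. rewrite Rinv_1. lra. replace (S k - 1)%nat with k in E by lia. simpl.
    rewrite Rinv_mult. lra. }
  split. 
  - replace (t * (/ 2 * / 2 ^ N0)) with ((t * / 2) * / 2 ^ N0) by ring.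
    apply Rmult_lt_compat_r; auto.
  - assert (0 < / 2 ^ k) by (apply Rinv_0_lt_compat, pow2_pos).
    assert (/ 2 ^ k * / 2 ^ N0 <= / 2 ^ k * 1) by (apply Rmult_le_compat_l; lra). lra.
Qed.

Lemma exp_le_mono x y : x <= y -> exp x <= exp y.
Proof. intros [H|H]. left; apply exp_increasing; auto. subst; lra. Qed.

Lemma div_le_mono_neg a b e : 0 < e -> a <= b -> - b / e <= - a / e.
Proof. intros He H. unfold Rdiv. apply Rmult_le_compat_r. left; apply Rinv_0_lt_compat; auto. lra. Qed.

Lemma exp_mass_nonneg e a b : 0 < e -> a <= b -> 0 <= exp_mass e a b.
Proof. intros He H. unfold exp_mass. assert (exp (- b / e) <= exp (- a / e)) by (apply exp_le_mono, div_le_mono_neg; auto). lra. Qed.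

Lemma m_nonneg e n i : 0 < e -> 0 <= exp_mass e (dy n i) (dy n (S i)).
Proof. intros He. apply exp_mass_nonneg; auto. rewrite dy_S. assert (0 < / 2 ^ n) by (apply Rinv_0_lt_compat, pow2_pos). lra. Qed.

Lemma cell_mass_nonneg e1 e2 n i j : 0 < e1 -> 0 < e2 -> 0 <= cell_mass e1 e2 n i j.
Proof. intros. unfold cell_mass. apply Rmult_le_pos; apply m_nonneg; auto. Qed.

Lemma term_nonneg e1 e2 A n i j : 0 < e1 -> 0 < e2 ->
  0 <= (if excluded_middle_informative (cell_in A n i j) then cell_mass e1 e2 n i j else 0).
Proof. intros. destruct excluded_middle_informative. apply cell_mass_nonneg; auto. lra. Qed.

Lemma inner_nonneg e1 e2 A n i M : 0 < e1 -> 0 < e2 ->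
  0 <= rsum (fun j => if excluded_middle_informative (cell_in A n i j) then cell_mass e1 e2 n i j else 0) M.
Proof. intros. apply rsum_nonneg. intros; apply term_nonneg; auto. Qed.

Lemma prob_ge_inner e1 e2 A p n : is_prob e1 e2 A p -> inner_approx e1 e2 A n <= p.
Proof. intros [H _]. apply H. exists n; auto. Qed.

Lemma exp0div e : 0 < e -> exp (- 0 / e) = 1.
Proof. intros. replace (- 0 / e) with 0 by (field; lra). apply exp_0. Qed.

Lemma NposN n : (1 <= n)%nat -> (0 < n * 2 ^ n)%nat.
Proof. intros. assert (0 < 2 ^ n)%nat by (apply Nat.neq_0_lt_0, Nat.pow_nonzero; lia). nia. Qed.

Lemma prob_ge_col e1 e2 A p n : 0 < e1 -> 0 < e2 -> is_prob e1 e2 A p -> (1 <= n)%nat ->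
  (forall x y, 0 <= x < / 2 ^ n -> 0 <= y -> A x y) ->
  (1 - exp (- (/ 2 ^ n) / e1)) * (1 - exp (- INR n / e2)) <= p.
Proof.
  intros He1 He2 Hp Hn HA.
  eapply Rle_trans; [|apply (prob_ge_inner _ _ _ _ n Hp)].
  unfold inner_approx.
  eapply Rle_trans; [|apply (rsum_ge_term _ _ 0%nat)].
  2:{ intros; apply inner_nonneg; auto. }
  2:{ apply NposN; auto. }
  set (m1 := exp_mass e1 (dy n 0) (dy n 1)).
  eapply Rle_trans; [|apply (rsum_tel_low _ (fun j => m1 * exp (- dy n j / e2)) 0%nat)].
  - rewrite dy_0, dy_mul, exp0div by auto. unfold m1, exp_mass. rewrite dy_S, dy_0, exp0div by auto.
    replace (0 + / 2 ^ n) with (/ 2 ^ n) by ring. right; ring.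
  - intros; apply term_nonneg; auto.
  - intros j _. destruct excluded_middle_informative as [C|C].
    + unfold cell_mass, exp_mass at 2. fold m1. right; ring.
    + exfalso. apply C. intros x y Hx Hy. apply HA.
      rewrite dy_S, dy_0 in Hx. lra.
      assert (0 <= dy n j) by apply dy_nonneg. lra.
  - lia.
Qed.

Lemma prob_ge_row e1 e2 A p n K : 0 < e1 -> 0 < e2 -> is_prob e1 e2 A p -> (K + 1 <= n)%nat ->
  (forall x y, INR K <= x -> 0 <= y < / 2 ^ n -> A x y) ->
  (exp (- INR K / e1) - exp (- INR n / e1)) * (1 - exp (- (/ 2 ^ n) / e2)) <= p.
Proof.
  intros He1 He2 Hp Hn HA.
  eapply Rle_trans; [|apply (prob_ge_inner _ _ _ _ n Hp)].
  unfold inner_approx.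
  set (m2 := exp_mass e2 (dy n 0) (dy n 1)).
  eapply Rle_trans; [|apply (rsum_tel_low _ (fun i => exp (- dy n i / e1) * m2) (K * 2 ^ n)%nat)].
  - rewrite !dy_mul. unfold m2, exp_mass. rewrite dy_S, dy_0, exp0div by auto.
    replace (0 + / 2 ^ n) with (/ 2 ^ n) by ring. right; ring.
  - intros; apply inner_nonneg; auto.
  - intros i Hi.
    eapply Rle_trans; [|eapply (rsum_ge_term (fun j => if excluded_middle_informative (cell_in A n i j) then cell_mass e1 e2 n i j else 0) _ 0%nat)].
    2:{ intros; apply term_nonneg; auto. }
    2:{ apply NposN; lia. }
    destruct excluded_middle_informative as [C|C].
    + unfold cell_mass, exp_mass at 1. fold m2. right; ring.
    + exfalso. apply C. intros x y Hx Hy. apply HA.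
      assert (dy n (K * 2 ^ n) <= dy n i) by (apply dy_le; auto). rewrite dy_mul in H. lra.
      rewrite dy_S, dy_0 in Hy. lra.
  - apply Nat.mul_le_mono_r. lia.
Qed.

Lemma one_minus_exp u : 1 - exp (- u) <= u.
Proof. pose proof (exp_ineq1_le (- u)). lra. Qed.

Lemma sum_m_le1 e n N : 0 < e -> rsum (fun i => exp_mass e (dy n i) (dy n (S i))) N <= 1.
Proof.
  intros He. eapply Rle_trans. apply (rsum_tel_up _ (fun i => exp (- dy n i / e))).
  intros; unfold exp_mass; lra.
  rewrite dy_0, exp0div by auto. pose proof (exp_pos (- dy n N / e)). lra.
Qed.

Lemma sum_thr e n t N : 0 < e -> 0 <= t ->
  rsum (fun i => if Rle_dec (dy n (S i)) t then exp_mass e (dy n i) (dy n (S i)) else 0) N <= t / e.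
Proof.
  intros He Ht. eapply Rle_trans. apply (rsum_tel_up _ (fun i => exp (- Rmin (dy n i) t / e))).
  - intros i _. assert (dy n i <= dy n (S i)) by (apply dy_le; lia).
    destruct Rle_dec as [C|C].
    + rewrite !Rmin_left by lra. unfold exp_mass; lra.
    + assert (Rmin (dy n i) t <= Rmin (dy n (S i)) t).
      { unfold Rmin. repeat destruct Rle_dec; lra. }
      assert (exp (- Rmin (dy n (S i)) t / e) <= exp (- Rmin (dy n i) t / e)).
      { apply exp_le_mono, div_le_mono_neg; auto. }
      lra.
  - rewrite dy_0. rewrite Rmin_left by lra. rewrite exp0div by auto.
    assert (0 <= dy n N) by apply dy_nonneg.
    assert (Rmin (dy n N) t <= t) by apply Rmin_r.
    pose proof (one_minus_exp (Rmin (dy n N) t / e)).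
    replace (- (Rmin (dy n N) t / e)) with (- Rmin (dy n N) t / e) in H1 by (field; lra).
    assert (Rmin (dy n N) t / e <= t / e) by (unfold Rdiv; apply Rmult_le_compat_r; [left; apply Rinv_0_lt_compat|]; lra).
    lra.
Qed.

Lemma sum_mean e n N : 0 < e ->
  rsum (fun i => exp_mass e (dy n i) (dy n (S i)) * dy n (S i)) N <= e + 1.
Proof.
  intros He. set (h := / 2 ^ n).
  assert (Hh0 : 0 < h) by (apply Rinv_0_lt_compat, pow2_pos).
  assert (Hh1 : h <= 1) by apply inv_pow2_le1.
  eapply Rle_trans. apply (rsum_tel_up _ (fun i => (dy n i + e + h) * exp (- dy n i / e))).
  - intros i _. rewrite dy_S. fold h. unfold exp_mass. fold h.
    set (x := dy n i).
    assert (E : exp (- x / e) = exp (- (x + h) / e) * exp (h / e)).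
    { rewrite <- exp_plus. f_equal. field; lra. }
    pose proof (exp_ineq1_le (h / e)).
    pose proof (exp_pos (- (x + h) / e)).
    set (E' := exp (- (x + h) / e)) in *.
    assert (e * exp (h / e) >= e + h).
    { replace (e + h) with (e * (1 + h / e)) by (field; lra). apply Rle_ge, Rmult_le_compat_l; lra. }
    rewrite E. nra.
  - rewrite dy_0, exp0div by auto.
    assert (0 <= dy n N) by apply dy_nonneg.
    pose proof (exp_pos (- dy n N / e)).
    assert (0 <= (dy n N + e + h) * exp (- dy n N / e)) by (apply Rmult_le_pos; lra).
    lra.
Qed.

Lemma rsum_ext f g N : (forall i, f i = g i) -> rsum f N = rsum g N.
Proof. intros H. induction N; simpl; auto. rewrite IHN, H. auto. Qed.

Lemma cell_cases (A : R -> R -> Prop) al ga n i j : 0 <= ga ->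
  (forall x y, 0 <= x -> 0 <= y -> A x y -> x < al \/ y < al \/ y < ga * x) ->
  cell_in A n i j ->
  dy n (S i) <= al \/ dy n (S j) <= al \/ dy n (S j) <= ga * dy n (S i).
Proof.
  intros Hg HB C.
  destruct (Rle_dec (dy n (S i)) al) as [H1|H1]; auto.
  destruct (Rle_dec (dy n (S j)) al) as [H2|H2]; auto.
  destruct (Rle_dec (dy n (S j)) (ga * dy n (S i))) as [H3|H3]; auto.
  exfalso. rewrite !dy_S in *. set (h := / 2 ^ n) in *.
  assert (Hh0 : 0 < h) by (apply Rinv_0_lt_compat, pow2_pos).
  set (b := dy n i + h) in *. set (d := dy n j + h) in *.
  set (d0 := Rmin (Rmin h (b - al)) (Rmin (d - al) (d - ga * b))).
  assert (d0 <= h /\ d0 <= b - al /\ d0 <= d - al /\ d0 <= d - ga * b /\ 0 < d0).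
  { unfold d0, Rmin. repeat destruct Rle_dec; lra. }
  set (del := d0 / 2).
  assert (0 <= ga * del) by (apply Rmult_le_pos; unfold del; lra).
  assert (ga * (b - del) = ga * b - ga * del) by ring.
  assert (0 <= dy n i) by apply dy_nonneg. assert (0 <= dy n j) by apply dy_nonneg.
  assert (P1 : 0 <= b - del) by (unfold b, del; lra).
  assert (P2 : 0 <= d - del) by (unfold d, del; lra).
  assert (P3 : A (b - del) (d - del)) by (apply C; rewrite dy_S; fold h; unfold b, d, del; lra).
  destruct (HB _ _ P1 P2 P3) as [K|[K|K]]; unfold del in *; lra.
Qed.

Lemma prob_le e1 e2 (A : R -> R -> Prop) p al ga : 0 < e1 -> 0 < e2 -> 0 < al -> 0 <= ga ->
  is_prob e1 e2 A p ->
  (forall x y, 0 <= x -> 0 <= y -> A x y -> x < al \/ y < al \/ y < ga * x) ->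
  p <= al / e1 + al / e2 + ga * (e1 + 1) / e2.
Proof.
  intros He1 He2 Hal Hga [_ Hp] HB. apply Hp. intros r [n ->].
  unfold inner_approx. set (N := (n * 2 ^ n)%nat).
  set (m1 := fun i => exp_mass e1 (dy n i) (dy n (S i))).
  set (m2 := fun i => exp_mass e2 (dy n i) (dy n (S i))).
  set (b := fun i => dy n (S i)).
  eapply Rle_trans. apply (rsum_le _ (fun i =>
      (if Rle_dec (b i) al then m1 i else 0) * 1 + m1 i * (al / e2) + (ga / e2) * (m1 i * b i))).
  - intros i _.
    eapply Rle_trans. apply (rsum_le _ (fun j =>
      (if Rle_dec (b i) al then m1 i else 0) * m2 j
      + m1 i * (if Rle_dec (b j) al then m2 j else 0)
      + m1 i * (if Rle_dec (b j) (ga * b i) then m2 j else 0))).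
    + intros j _. pose proof (m_nonneg e1 n i He1). pose proof (m_nonneg e2 n j He2).
      fold (m1 i) in H. fold (m2 j) in H0.
      destruct excluded_middle_informative as [C|C].
      * destruct (cell_cases A al ga n i j Hga HB C) as [D|[D|D]];
        unfold cell_mass; fold (m1 i) (m2 j); unfold b in *;
        repeat destruct Rle_dec; try lra; nra.
      * repeat destruct Rle_dec; nra.
    + rewrite !rsum_plus, !rsum_scal.
      assert (0 <= m1 i) by (apply m_nonneg; auto).
      assert (0 <= b i) by apply dy_nonneg.
      assert (S2 : rsum m2 N <= 1) by (apply sum_m_le1; auto).
      assert (T2 : rsum (fun j => if Rle_dec (b j) al then m2 j else 0) N <= al / e2)
        by (apply sum_thr; lra).
      assert (T3 : rsum (fun j => if Rle_dec (b j) (ga * b i) then m2 j else 0) N <= ga * b i / e2)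
        by (apply sum_thr; auto; apply Rmult_le_pos; lra).
      assert (0 <= (if Rle_dec (b i) al then m1 i else 0)) by (destruct Rle_dec; lra).
      assert (0 <= rsum m2 N) by (apply rsum_nonneg; intros; apply m_nonneg; auto).
      apply Rplus_le_compat. apply Rplus_le_compat.
      apply Rmult_le_compat_l; auto.
      apply Rmult_le_compat_l; auto.
      eapply Rle_trans. apply Rmult_le_compat_l. auto. apply T3. right; field; lra.
  - rewrite !rsum_plus, !rsum_scal.
    assert (T1 : rsum (fun i => (if Rle_dec (b i) al then m1 i else 0) * 1) N <= al / e1).
    { eapply Rle_trans; [|apply (sum_thr e1 n al N); auto; lra].
      apply rsum_le; intros; unfold b, m1; destruct Rle_dec; lra. }
    assert (S1 : rsum m1 N <= 1) by (apply sum_m_le1; auto).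
    assert (M1 : rsum (fun i => m1 i * b i) N <= e1 + 1) by (apply sum_mean; auto).
    assert (0 <= al / e2) by (apply Rmult_le_pos; [lra| left; apply Rinv_0_lt_compat; lra]).
    assert (0 <= ga / e2) by (apply Rmult_le_pos; [lra| left; apply Rinv_0_lt_compat; lra]).
    assert (al / e2 * rsum m1 N <= al / e2 * 1) by (apply Rmult_le_compat_l; auto).
    assert (ga / e2 * rsum (fun i => m1 i * b i) N <= ga / e2 * (e1 + 1)) by (apply Rmult_le_compat_l; auto).
    replace (ga * (e1 + 1) / e2) with (ga / e2 * (e1 + 1)) by (field; lra).
    replace (rsum (fun i => m1 i * (al / e2)) N) with (al / e2 * rsum m1 N).
    2:{ rewrite <- rsum_scal. apply rsum_ext. intros; ring. }
    lra.
Qed.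


Lemma prob_le1 e1 e2 (A : R -> R -> Prop) p : 0 < e1 -> 0 < e2 -> is_prob e1 e2 A p -> p <= 1.
Proof.
  intros He1 He2 [_ Hp]. apply Hp. intros r [n ->].
  unfold inner_approx.
  eapply Rle_trans. apply (rsum_le _ (fun i => exp_mass e1 (dy n i) (dy n (S i)))).
  - intros i _. eapply Rle_trans. apply (rsum_le _ (fun j => exp_mass e1 (dy n i) (dy n (S i)) * exp_mass e2 (dy n j) (dy n (S j)))).
    + intros j _. destruct excluded_middle_informative. right; reflexivity. apply cell_mass_nonneg; auto.
    + rewrite rsum_scal. pose proof (m_nonneg e1 n i He1). pose proof (sum_m_le1 e2 n (n * 2 ^ n) He2).
      nra.
  - apply sum_m_le1; auto.
Qed.

Lemma ln2_pos : 0 < ln 2.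
Proof. rewrite <- ln_1. apply ln_increasing; lra. Qed.

Lemma ln_lt_iff z w : 0 < z -> (ln z < w <-> z < exp w).
Proof.
  intros Hz. split; intros H.
  - rewrite <- (exp_ln z) by auto. apply exp_increasing; auto.
  - rewrite <- (ln_exp w). apply ln_increasing; auto.
Qed.

Lemma log_lt z y : 0 < z -> (/ 2 * log2 z < y <-> z < exp (2 * y * ln 2)).
Proof.
  intros Hz. pose proof ln2_pos. rewrite <- ln_lt_iff by auto. unfold log2.
  split; intros H1.
  - apply (Rmult_lt_compat_r (2 * ln 2)) in H1; [|lra].
    replace (/ 2 * (ln z / ln 2) * (2 * ln 2)) with (ln z) in H1 by (field; lra). lra.
  - apply (Rmult_lt_reg_r (2 * ln 2)); [lra|].
    replace (/ 2 * (ln z / ln 2) * (2 * ln 2)) with (ln z) by (field; lra). lra.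
Qed.

Lemma log_gt z y : 0 < z -> (/ 2 * log2 z > y <-> z > exp (2 * y * ln 2)).
Proof.
  intros Hz. pose proof ln2_pos. unfold log2.
  assert (ln z > 2 * y * ln 2 <-> z > exp (2 * y * ln 2)).
  { split; intros H1.
    - rewrite <- (exp_ln z) by auto. apply exp_increasing; auto.
    - rewrite <- (ln_exp (2 * y * ln 2)). apply ln_increasing; auto. apply exp_pos. }
  rewrite <- H0. split; intros H1.
  - apply (Rmult_lt_compat_r (2 * ln 2)) in H1; [|lra].
    replace (/ 2 * (ln z / ln 2) * (2 * ln 2)) with (ln z) in H1 by (field; lra). lra.
  - apply (Rmult_lt_reg_r (2 * ln 2)); [lra|].
    replace (/ 2 * (ln z / ln 2) * (2 * ln 2)) with (ln z) by (field; lra). lra.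
Qed.

Lemma hm_nonneg x y : 0 <= x -> 0 <= y -> 0 <= x * y / (x + y).
Proof.
  intros. destruct (Req_dec (x + y) 0) as [E|E].
  - unfold Rdiv. rewrite E, Rinv_0. rewrite Rmult_0_r. lra.
  - apply Rmult_le_pos. nra. left; apply Rinv_0_lt_compat; lra.
Qed.

Lemma hm_le x y : 0 <= x -> 0 <= y -> x * y / (x + y) <= x.
Proof.
  intros. destruct (Req_dec (x + y) 0) as [E|E].
  - unfold Rdiv. rewrite E, Rinv_0. rewrite Rmult_0_r. lra.
  - apply (Rmult_le_reg_r (x + y)). lra. unfold Rdiv. rewrite (Rmult_assoc (x * y)), Rinv_l by lra. nra.
Qed.

Lemma hm_ge x y al : 0 < al -> al <= x -> al <= y -> al / 2 <= x * y / (x + y).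
Proof.
  intros. apply (Rmult_le_reg_r (x + y)). lra. unfold Rdiv. rewrite (Rmult_assoc (x * y)), Rinv_l by lra. nra.
Qed.

Section Ev.
Variables (Rd Rs rho snr : R).
Hypothesis Hsnr : 0 < snr.
Hypothesis HRd : Rs < Rd.
Hypothesis HRs : 0 <= Rs.
Definition Qc := exp (2 * Rd * ln 2).
Definition ac := exp (2 * (Rd - Rs) * ln 2) - 1.
Definition Sp := Rpower snr rho.

Lemma Sp_pos : 0 < Sp.
Proof. unfold Sp, Rpower. apply exp_pos. Qed.

Lemma ac_pos : 0 < ac.
Proof. unfold ac. pose proof ln2_pos. pose proof (exp_ineq1 (2 * (Rd - Rs) * ln 2)).
  assert (0 < 2 * (Rd - Rs) * ln 2) by (apply Rmult_lt_0_compat; lra).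
  assert (2 * (Rd - Rs) * ln 2 <> 0) by lra. specialize (H0 H2). lra. Qed.

Lemma Qc_gt1 : 1 < Qc.
Proof. unfold Qc. pose proof ln2_pos. pose proof (exp_ineq1 (2 * Rd * ln 2)).
  assert (0 < 2 * Rd * ln 2) by (apply Rmult_lt_0_compat; lra).
  assert (2 * Rd * ln 2 <> 0) by lra. specialize (H0 H2). lra. Qed.

Lemma El_upper x y : 0 <= x -> 0 <= y -> E_l Rd Rs rho snr x y -> y < (snr / (ac * Sp)) * x.
Proof.
  intros Hx Hy H. unfold E_l in H. fold Sp in H. pose proof Sp_pos as HS. pose proof ac_pos as Ha.
  assert (Hd : 0 < y * Sp + 1) by nra.
  assert (Hq : 0 <= x * snr / (y * Sp + 1)) by (apply Rmult_le_pos; [nra | left; apply Rinv_0_lt_compat; lra]).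
  apply log_gt in H; [|lra].
  assert (H2 : x * snr / (y * Sp + 1) > ac) by (unfold ac; lra).
  assert (H3 : x * snr > ac * (y * Sp + 1)).
  { apply (Rmult_lt_compat_r (y * Sp + 1)) in H2; auto. unfold Rdiv in H2.
    rewrite Rmult_assoc, Rinv_l in H2 by lra. lra. }
  replace (snr / (ac * Sp) * x) with ((x * snr) / (ac * Sp)) by (field; lra).
  apply (Rmult_lt_reg_r (ac * Sp)). nra. unfold Rdiv. rewrite Rmult_assoc, Rinv_l by nra. nra.
Qed.

Lemma MF_upper x y : 0 <= x -> 0 <= y -> E_MF Rd snr x y -> x < 2 * Qc / snr \/ y < 2 * Qc / snr.
Proof.
  intros Hx Hy H. unfold E_MF in H. pose proof (hm_nonneg x y Hx Hy).
  apply log_lt in H; [|nra]. fold Qc in H.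
  destruct (Rlt_dec x (2 * Qc / snr)); auto. destruct (Rlt_dec y (2 * Qc / snr)); auto.
  exfalso. pose proof Qc_gt1. assert (0 < 2 * Qc / snr) by (apply Rmult_lt_0_compat; [lra|apply Rinv_0_lt_compat; lra]).
  pose proof (hm_ge x y (2 * Qc / snr) H2 ltac:(lra) ltac:(lra)).
  assert (snr * (2 * Qc / snr / 2) = Qc) by (field; lra).
  assert (snr * (2 * Qc / snr / 2) <= snr * (x * y / (x + y))) by (apply Rmult_le_compat_l; lra).
  lra.
Qed.

Lemma cs_upper x y : 0 <= x -> 0 <= y -> E_cs Rd snr x y -> x < 2 * Qc / snr \/ y < 2 * Qc / snr.
Proof.
  intros Hx Hy H. unfold E_cs in H.
  assert (0 <= Rmin x y) by (unfold Rmin; destruct Rle_dec; lra).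
  apply log_lt in H; [|nra]. fold Qc in H. pose proof Qc_gt1.
  assert (Rmin x y < Qc / snr).
  { apply (Rmult_lt_reg_r snr); auto. unfold Rdiv. rewrite Rmult_assoc, Rinv_l by lra. lra. }
  assert (Qc / snr < 2 * Qc / snr) by (unfold Rdiv; apply Rmult_lt_compat_r; [apply Rinv_0_lt_compat|]; lra).
  unfold Rmin in *; destruct Rle_dec; lra.
Qed.

Lemma col_in x y : 0 <= x -> 0 <= y -> x * snr < Qc - 1 -> E_MF Rd snr x y /\ E_cs Rd snr x y.
Proof.
  intros Hx Hy H. pose proof (hm_nonneg x y Hx Hy). pose proof (hm_le x y Hx Hy).
  split.
  - unfold E_MF. apply log_lt; [nra|]. fold Qc. nra.
  - unfold E_cs. assert (0 <= Rmin x y <= x) by (unfold Rmin; destruct Rle_dec; lra).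
    apply log_lt; [nra|]. fold Qc. nra.
Qed.

Lemma row_in x y (K u : R) : 1 <= snr -> 2 * ac <= K -> K <= x -> 0 <= y < u -> u * Sp <= snr ->
  E_l Rd Rs rho snr x y.
Proof.
  intros H1 HK Hx Hy Hu. pose proof Sp_pos. pose proof ac_pos. unfold E_l; fold Sp.
  assert (Hd : 0 < y * Sp + 1) by nra.
  assert (0 <= x * snr / (y * Sp + 1)) by (apply Rmult_le_pos; [nra | left; apply Rinv_0_lt_compat; lra]).
  apply log_gt; [lra|].
  assert (y * Sp < snr) by nra.
  assert (ac * (y * Sp + 1) < x * snr) by nra.
  assert (Hf : x * snr / (y * Sp + 1) > ac).
  { apply (Rmult_lt_reg_r (y * Sp + 1)); auto. unfold Rdiv. rewrite Rmult_assoc, Rinv_l by lra. lra. }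
  unfold ac in Hf. lra.
Qed.

End Ev.

Lemma ln_le_mono x y : 0 < x -> x <= y -> ln x <= ln y.
Proof. intros Hx [H|H]. left; apply ln_increasing; auto. subst; lra. Qed.

Lemma ln_bound_exp c w : 0 < c -> ln (c * exp w) = ln c + w.
Proof. intros. rewrite ln_mult by (auto; apply exp_pos). rewrite ln_exp. auto. Qed.

Lemma big_ln s k e : 0 < e -> exp (k / e) < s -> k < e * ln s.
Proof.
  intros He H. assert (0 < s) by (pose proof (exp_pos (k / e)); lra).
  apply ln_increasing in H; [|apply exp_pos]. rewrite ln_exp in H.
  apply (Rmult_lt_compat_l e) in H; auto. replace (e * (k / e)) with k in H by (field; lra). auto.
Qed.

Lemma limsup_gen (f : R -> R) L c C s0 : 0 < c -> 0 < C -> 1 <= s0 ->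
  (forall s, s0 < s -> c * exp (- L * ln s) <= f s <= C * exp (- L * ln s)) ->
  is_limsup_infty (fun s => - ln (f s) / ln s) L.
Proof.
  intros Hc HC Hs0 Hf.
  assert (Key : forall s, s0 < s -> 0 < ln s /\
     L * ln s - ln C <= - ln (f s) /\ - ln (f s) <= L * ln s - ln c).
  { intros s Hs. destruct (Hf s Hs) as [H1 H2].
    assert (0 < ln s) by (rewrite <- ln_1; apply ln_increasing; lra).
    pose proof (exp_pos (- L * ln s)).
    assert (0 < c * exp (- L * ln s)) by (apply Rmult_lt_0_compat; auto).
    pose proof (ln_le_mono _ _ H3 H1). assert (Hfp : 0 < f s) by lra. pose proof (ln_le_mono _ _ Hfp H2).
    rewrite ln_bound_exp in H4, H5 by auto. assert (- L * ln s = - (L * ln s)) by ring. split; auto. lra. }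
  split.
  - intros e He. exists (Rmax s0 (exp (Rabs (ln c) / e))). intros s Hs.
    assert (s0 < s) by (pose proof (Rmax_l s0 (exp (Rabs (ln c) / e))); lra).
    assert (exp (Rabs (ln c) / e) < s) by (pose proof (Rmax_r s0 (exp (Rabs (ln c) / e))); lra).
    destruct (Key s H) as [Hl [_ H2]].
    pose proof (big_ln _ _ _ He H0).
    pose proof (Rle_abs (- ln c)). rewrite Rabs_Ropp in H3.
    apply (Rmult_lt_reg_r (ln s)); auto. unfold Rdiv. rewrite Rmult_assoc, Rinv_l by lra. nra.
  - intros e He M. set (s := Rmax M (Rmax s0 (exp (Rabs (ln C) / e))) + 1).
    exists s.
    pose proof (Rmax_l M (Rmax s0 (exp (Rabs (ln C) / e)))).
    pose proof (Rmax_r M (Rmax s0 (exp (Rabs (ln C) / e)))).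
    pose proof (Rmax_l s0 (exp (Rabs (ln C) / e))).
    pose proof (Rmax_r s0 (exp (Rabs (ln C) / e))).
    split. unfold s; lra.
    assert (s0 < s) by (unfold s; lra).
    assert (exp (Rabs (ln C) / e) < s) by (unfold s; lra).
    destruct (Key s H3) as [Hl [H5 _]].
    pose proof (big_ln _ _ _ He H4).
    pose proof (Rle_abs (ln C)).
    apply (Rmult_lt_reg_r (ln s)); auto. unfold Rdiv. rewrite Rmult_assoc, Rinv_l by lra. nra.
Qed.

Lemma lower_exp v e : 0 <= v <= 1 -> 0 < e -> v / (e + 1) <= 1 - exp (- v / e).
Proof.
  intros Hv He.
  pose proof (exp_ineq1_le (v / e)).
  assert (Ex : exp (- v / e) * exp (v / e) = 1).
  { rewrite <- exp_plus. replace (- v / e + v / e) with 0 by (field; lra). apply exp_0. }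
  pose proof (exp_pos (- v / e)). pose proof (exp_pos (v / e)).
  assert (v / e * e = v) by (field; lra).
  assert (v / (e + 1) * (e + 1) = v) by (field; lra).
  assert (0 <= v / e) by (apply Rmult_le_pos; [lra|left; apply Rinv_0_lt_compat; lra]).
  assert (0 <= v / (e + 1)) by (apply Rmult_le_pos; [lra|left; apply Rinv_0_lt_compat; lra]).
  assert (v / (e + 1) * (1 + v / e) <= v / e).
  { assert (v / (e + 1) * (1 + v / e) * (e * (e+1)) = v * (e + v)) by (field; lra).
    assert (v / e * (e * (e + 1)) = v * (e + 1)) by (field; lra).
    assert (v * (e + v) <= v * (e + 1)) by nra.
    assert (0 < e * (e + 1)) by nra. nra. }
  nra.
Qed.

Section Gen.
Variables (e1 e2 Rd Rs rho : R) (A : R -> R -> R -> Prop) (p : R -> R).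
Hypotheses (He1 : 0 < e1) (He2 : 0 < e2) (HRd : Rs < Rd) (HRs : 0 <= Rs) (Hrho : 0 <= rho).
Hypothesis Hp : forall snr, 0 < snr -> is_prob e1 e2 (A snr) (p snr).
Hypothesis HA_up : forall snr x y, 0 < snr -> 0 <= x -> 0 <= y -> A snr x y ->
  x < 2 * Qc Rd / snr \/ y < 2 * Qc Rd / snr \/ y < (snr / (ac Rd Rs * Sp rho snr)) * x.
Hypothesis HA_col : forall snr x y, 0 < snr -> 0 <= x -> 0 <= y -> x * snr < Qc Rd - 1 -> A snr x y.
Hypothesis HA_row : forall snr x y K u, 1 <= snr -> 2 * ac Rd Rs <= K -> K <= x -> 0 <= y < u ->
  u * Sp rho snr <= snr -> A snr x y.

Lemma L1 K : 2 * ac Rd Rs <= INR K -> forall snr t, 1 <= snr -> 0 < t <= 1 -> t * Sp rho snr <= snr ->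
  (exp (- INR K / e1) - exp (- INR (K + 1) / e1)) * / (2 ^ S (K + 1) * (e2 + 1)) * t <= p snr.
Proof.
  intros HK snr t Hs Ht HtS.
  destruct (dyadic_choice t (K + 1) Ht) as [n [Hn [Hn1 Hn2]]].
  pose proof (Sp_pos rho snr) as HSp.
  assert (R1 := prob_ge_row e1 e2 (A snr) (p snr) n K He1 He2 (Hp snr ltac:(lra)) Hn).
  assert (0 < / 2 ^ n) by (apply Rinv_0_lt_compat, pow2_pos).
  lapply R1.
  2:{ intros x y Hx Hy. apply (HA_row snr x y (INR K) (/ 2 ^ n)); auto. nra. }
  intros R2. eapply Rle_trans; [|apply R2].
  assert (exp (- INR n / e1) <= exp (- INR (K + 1) / e1)).
  { apply exp_le_mono, div_le_mono_neg; auto. apply le_INR; auto. }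
  assert (0 < exp (- INR K / e1) - exp (- INR (K + 1) / e1)).
  { assert (exp (- INR (K + 1) / e1) < exp (- INR K / e1)); [|lra].
    apply exp_increasing. unfold Rdiv. apply Rmult_lt_compat_r. apply Rinv_0_lt_compat; auto.
    rewrite plus_INR. simpl. lra. }
  assert (/ 2 ^ n / (e2 + 1) <= 1 - exp (- / 2 ^ n / e2)) by (apply lower_exp; auto; split; [lra|apply inv_pow2_le1]).
  assert (0 < 2 ^ S (K + 1)) by apply pow2_pos.
  assert (t * / 2 ^ S (K + 1) / (e2 + 1) <= / 2 ^ n / (e2 + 1)).
  { unfold Rdiv. apply Rmult_le_compat_r. left; apply Rinv_0_lt_compat; lra. lra. }
  replace ((exp (- INR K / e1) - exp (- INR (K + 1) / e1)) * / (2 ^ S (K + 1) * (e2 + 1)) * t)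
    with ((exp (- INR K / e1) - exp (- INR (K + 1) / e1)) * (t * / 2 ^ S (K + 1) / (e2 + 1)))
    by (field; lra).
  assert (0 <= 1 - exp (- / 2 ^ n / e2)).
  { assert (0 <= / 2 ^ n / (e2 + 1)) by (apply Rmult_le_pos; [lra|left; apply Rinv_0_lt_compat; lra]). lra. }
  apply Rmult_le_compat; try lra.
  assert (0 <= / 2 ^ S (K + 1)) by (left; apply Rinv_0_lt_compat; lra).
  apply Rmult_le_pos. apply Rmult_le_pos; lra. left; apply Rinv_0_lt_compat; lra.
Qed.

Lemma L2 : forall snr, 1 <= snr -> Qc Rd - 1 <= snr ->
  (Qc Rd - 1) * / (2 ^ 2 * (e1 + 1)) * (1 - exp (- 1 / e2)) * / snr <= p snr.
Proof.
  intros snr Hs HQ. pose proof (Qc_gt1 Rd Rs HRd HRs) as HQ1.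
  set (t := (Qc Rd - 1) / snr).
  assert (Ht : 0 < t <= 1).
  { unfold t. split. apply Rmult_lt_0_compat; [lra|apply Rinv_0_lt_compat; lra].
    apply (Rmult_le_reg_r snr). lra. unfold Rdiv. rewrite Rmult_assoc, Rinv_l by lra. lra. }
  destruct (dyadic_choice t 1 Ht) as [n [Hn [Hn1 Hn2]]].
  assert (0 < / 2 ^ n) by (apply Rinv_0_lt_compat, pow2_pos).
  assert (R1 := prob_ge_col e1 e2 (A snr) (p snr) n He1 He2 (Hp snr ltac:(lra)) Hn).
  lapply R1.
  2:{ intros x y Hx Hy. apply HA_col; auto; try lra.
      assert (x * snr < t * snr) by (apply Rmult_lt_compat_r; lra).
      unfold t in H0. replace ((Qc Rd - 1) / snr * snr) with (Qc Rd - 1) in H0 by (field; lra). lra. }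
  intros R2. eapply Rle_trans; [|apply R2].
  assert (exp (- INR n / e2) <= exp (- 1 / e2)).
  { apply exp_le_mono, div_le_mono_neg; auto. apply (le_INR 1); auto. }
  assert (/ 2 ^ n / (e1 + 1) <= 1 - exp (- / 2 ^ n / e1)) by (apply lower_exp; auto; split; [lra|apply inv_pow2_le1]).
  assert (0 < 1 - exp (- 1 / e2)).
  { assert (exp (- 1 / e2) < exp 0); [|rewrite exp_0 in *; lra].
    apply exp_increasing. unfold Rdiv. assert (0 < / e2) by (apply Rinv_0_lt_compat; auto). nra. }
  assert (t * / 2 ^ 2 / (e1 + 1) <= / 2 ^ n / (e1 + 1)).
  { unfold Rdiv. apply Rmult_le_compat_r. left; apply Rinv_0_lt_compat; lra. simpl in Hn1. simpl. lra. }
  replace ((Qc Rd - 1) * / (2 ^ 2 * (e1 + 1)) * (1 - exp (- 1 / e2)) * / snr)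
    with ((t * / 2 ^ 2 / (e1 + 1)) * (1 - exp (- 1 / e2))) by (unfold t; field; lra).
  apply Rmult_le_compat; try lra.
  apply Rmult_le_pos. apply Rmult_le_pos. lra. simpl; lra. left; apply Rinv_0_lt_compat; lra.
Qed.

Lemma Up snr : 0 < snr ->
  p snr <= 2 * Qc Rd / snr / e1 + 2 * Qc Rd / snr / e2 + (snr / (ac Rd Rs * Sp rho snr)) * (e1 + 1) / e2.
Proof.
  intros Hs. pose proof (Qc_gt1 Rd Rs HRd HRs). pose proof (ac_pos Rd Rs HRd). pose proof (Sp_pos rho snr).
  apply (prob_le e1 e2 (A snr)); auto.
  apply Rmult_lt_0_compat; [lra|apply Rinv_0_lt_compat; lra].
  left. apply Rmult_lt_0_compat; [lra|apply Rinv_0_lt_compat; nra].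
Qed.

Lemma exp_Lm L s : 0 < s -> exp (- L * ln s) > 0.
Proof. intros. apply exp_pos. Qed.

Theorem gen_limsup : is_limsup_infty (fun snr => - ln (p snr) / ln snr) (gsdg rho).
Proof.
  pose proof (Qc_gt1 Rd Rs HRd HRs) as HQ. pose proof (ac_pos Rd Rs HRd) as Ha.
  destruct (INR_unbounded (2 * ac Rd Rs)) as [K HK].
  set (c0 := exp (- INR K / e1) - exp (- INR (K + 1) / e1)).
  assert (Hc0 : 0 < c0).
  { unfold c0. assert (exp (- INR (K + 1) / e1) < exp (- INR K / e1)); [|lra].
    apply exp_increasing. unfold Rdiv. apply Rmult_lt_compat_r. apply Rinv_0_lt_compat; auto.
    rewrite plus_INR. simpl. lra. }
  set (c1 := c0 * / (2 ^ S (K + 1) * (e2 + 1))).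
  assert (Hc1 : 0 < c1).
  { unfold c1. apply Rmult_lt_0_compat; auto. apply Rinv_0_lt_compat. apply Rmult_lt_0_compat. apply pow2_pos. lra. }
  assert (HL1 := L1 K ltac:(lra)). fold c0 c1 in HL1.
  set (c2 := (Qc Rd - 1) * / (2 ^ 2 * (e1 + 1)) * (1 - exp (- 1 / e2))).
  assert (Hc2 : 0 < c2).
  { unfold c2. assert (0 < 1 - exp (- 1 / e2)).
    { assert (exp (- 1 / e2) < exp 0); [|rewrite exp_0 in *; lra].
      apply exp_increasing. unfold Rdiv. assert (0 < / e2) by (apply Rinv_0_lt_compat; auto). nra. }
    apply Rmult_lt_0_compat; auto. apply Rmult_lt_0_compat. lra. apply Rinv_0_lt_compat.
    apply Rmult_lt_0_compat. simpl; lra. lra. }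
  assert (HL2 := L2). fold c2 in HL2.
  set (s0 := Rmax 1 (Qc Rd - 1)).
  assert (Hs0 : 1 <= s0) by apply Rmax_l.
  assert (Hs0' : Qc Rd - 1 <= s0) by apply Rmax_r.
  set (C := 2 * Qc Rd / e1 + 2 * Qc Rd / e2 + (e1 + 1) / (ac Rd Rs * e2)).
  assert (HC : 0 < C).
  { unfold C. assert (0 < 2 * Qc Rd / e1) by (apply Rmult_lt_0_compat; [lra|apply Rinv_0_lt_compat; lra]).
    assert (0 < 2 * Qc Rd / e2) by (apply Rmult_lt_0_compat; [lra|apply Rinv_0_lt_compat; lra]).
    assert (0 < (e1 + 1) / (ac Rd Rs * e2)) by (apply Rmult_lt_0_compat; [lra|apply Rinv_0_lt_compat; nra]).
    lra. }
  assert (Id : forall s, 1 <= s -> exp (- (1) * ln s) = / s /\ exp (- (rho - 1) * ln s) * Sp rho s = s /\ 0 <= ln s).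
  { intros s Hs. split; [|split].
    - replace (- (1) * ln s) with (- ln s) by ring. rewrite exp_Ropp, exp_ln; lra.
    - unfold Sp, Rpower. rewrite <- exp_plus. replace (- (rho - 1) * ln s + rho * ln s) with (ln s) by ring.
      rewrite exp_ln; lra.
    - rewrite <- ln_1. apply ln_le_mono; lra. }
  assert (UpL : forall L s, L <= 1 -> L <= rho - 1 -> 1 <= s -> p s <= C * exp (- L * ln s)).
  { intros L s HL1' HL2' Hs. destruct (Id s Hs) as [I1 [I2 I3]].
    pose proof (Sp_pos rho s).
    eapply Rle_trans. apply Up; lra.
    assert (E1 : exp (- (1) * ln s) <= exp (- L * ln s)) by (apply exp_le_mono; nra).
    assert (E2 : exp (- (rho - 1) * ln s) <= exp (- L * ln s)) by (apply exp_le_mono; nra).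
    rewrite I1 in E1.
    replace (s / (ac Rd Rs * Sp rho s)) with (exp (- (rho - 1) * ln s) / ac Rd Rs).
    2:{ rewrite <- I2 at 2. field. split; lra. }
    replace (2 * Qc Rd / s / e1 + 2 * Qc Rd / s / e2 + exp (- (rho - 1) * ln s) / ac Rd Rs * (e1 + 1) / e2)
      with ((2 * Qc Rd / e1 + 2 * Qc Rd / e2) * / s + (e1 + 1) / (ac Rd Rs * e2) * exp (- (rho - 1) * ln s))
      by (field; repeat split; lra).
    unfold C. assert (0 <= 2 * Qc Rd / e1 + 2 * Qc Rd / e2).
    { assert (0 < 2 * Qc Rd / e1) by (apply Rmult_lt_0_compat; [lra|apply Rinv_0_lt_compat; lra]).
      assert (0 < 2 * Qc Rd / e2) by (apply Rmult_lt_0_compat; [lra|apply Rinv_0_lt_compat; lra]). lra. }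
    assert (0 < (e1 + 1) / (ac Rd Rs * e2)) by (apply Rmult_lt_0_compat; [lra|apply Rinv_0_lt_compat; nra]).
    assert ((2 * Qc Rd / e1 + 2 * Qc Rd / e2) * / s <= (2 * Qc Rd / e1 + 2 * Qc Rd / e2) * exp (- L * ln s))
      by (apply Rmult_le_compat_l; auto).
    assert ((e1 + 1) / (ac Rd Rs * e2) * exp (- (rho - 1) * ln s) <= (e1 + 1) / (ac Rd Rs * e2) * exp (- L * ln s))
      by (apply Rmult_le_compat_l; lra).
    lra. }
  unfold gsdg. destruct (Rle_dec rho 1) as [R1|R1]; [|apply Rnot_le_lt in R1; destruct (Rle_dec rho 2) as [R2|R2]; [|apply Rnot_le_lt in R2]].
  - apply (limsup_gen _ 0 c1 1 s0); auto; try lra.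
    intros s Hs. replace (- 0 * ln s) with 0 by ring. rewrite exp_0, !Rmult_1_r. split.
    + destruct (Id s ltac:(lra)) as [_ [_ I3]].
      rewrite <- (Rmult_1_r c1). apply HL1; try lra. rewrite Rmult_1_l. unfold Sp, Rpower.
      rewrite <- (exp_ln s) at 2 by lra. apply exp_le_mono. nra.
    + apply (prob_le1 e1 e2 (A s)); auto. apply Hp; lra.
  - apply (limsup_gen _ (rho - 1) c1 C s0); auto; try lra.
    intros s Hs. destruct (Id s ltac:(lra)) as [I1 [I2 I3]]. split.
    + apply HL1; try lra.
      split. apply exp_pos. apply Rle_trans with (exp 0); [apply exp_le_mono; nra | rewrite exp_0; lra].
    + apply UpL; lra.
  - apply (limsup_gen _ 1 c2 C s0); auto; try lra.
    intros s Hs. destruct (Id s ltac:(lra)) as [I1 [I2 I3]]. split.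
    + rewrite I1. apply HL2; lra.
    + apply UpL; lra.
Qed.

End Gen.

Theorem theorem3 (e1 e2 Rd Rs rho : R) (pMF pcs : R -> R) :
  0 < e1 -> 0 < e2 -> Rs < Rd -> 0 <= Rs -> 0 <= rho ->
  (forall snr, 0 < snr ->
     is_prob e1 e2 (fun g1 g2 => E_MF Rd snr g1 g2 \/ E_l Rd Rs rho snr g1 g2) (pMF snr)) ->
  (forall snr, 0 < snr ->
     is_prob e1 e2 (fun g1 g2 => E_cs Rd snr g1 g2 \/ E_l Rd Rs rho snr g1 g2) (pcs snr)) ->
  is_limsup_infty (fun snr => - ln (pMF snr) / ln snr) (gsdg rho) /\
  is_limsup_infty (fun snr => - ln (pcs snr) / ln snr) (gsdg rho).
Proof.
  intros He1 He2 HRd HRs Hrho HMF Hcs. split.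
  - apply (gen_limsup e1 e2 Rd Rs rho (fun snr g1 g2 => E_MF Rd snr g1 g2 \/ E_l Rd Rs rho snr g1 g2)); auto.
    + intros snr x y Hs Hx Hy [H|H].
      * destruct (MF_upper Rd Rs snr Hs HRd HRs x y Hx Hy H); auto.
      * right; right. apply (El_upper Rd Rs rho snr Hs HRd x y Hx Hy H).
    + intros snr x y Hs Hx Hy H. left. apply (col_in Rd snr Hs x y Hx Hy H).
    + intros snr x y K u H1 H2 H3 H4 H5. right. apply (row_in Rd Rs rho snr HRd x y K u); auto.
  - apply (gen_limsup e1 e2 Rd Rs rho (fun snr g1 g2 => E_cs Rd snr g1 g2 \/ E_l Rd Rs rho snr g1 g2)); auto.
    + intros snr x y Hs Hx Hy [H|H].
      * destruct (cs_upper Rd Rs snr Hs HRd HRs x y Hx Hy H); auto.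
      * right; right. apply (El_upper Rd Rs rho snr Hs HRd x y Hx Hy H).
    + intros snr x y Hs Hx Hy H. left. apply (col_in Rd snr Hs x y Hx Hy H).
    + intros snr x y K u H1 H2 H3 H4 H5. right. apply (row_in Rd Rs rho snr HRd x y K u); auto.
Qed.
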